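(* Let $s\geq1$ and consider an explicit $s$-stage Runge–Kutta method in Shu–Osher form with coefficients $a_{i,k}\geq0$, $b_{i,k}\geq0$ ($1\leq i\leq s$, $0\leq k\leq i-1$), $\sum_{k=0}^{i-1}a_{i,k}=1$ for each $i$. Let $\alpha>0$ and $T^{(1)}_\lambda(\beta,\Delta t)=(1-\beta\Delta t\lambda)^{-1}$. Apply the method to $dy/dt=T^{(1)}_\lambda(\alpha,\Delta t)\lambda y$: $y^{(0)}=y^n$, $y^{(i)}=\sum_{k=0}^{i-1}\left(a_{i,k}y^{(k)}+\Delta t\,b_{i,k}T^{(1)}_\lambda(\alpha,\Delta t)\lambda y^{(k)}\right)$, $y^{n+1}=y^{(s)}$. Suppose that for every pair $(i,k)$ with $b_{i,k}>0$, setting $\alpha_{i,k}=(a_{i,k}/b_{i,k})\alpha$, the explicit Euler integration of $dy/dt=T^{(1)}_\lambda(\alpha_{i,k},\Delta t)\lambda y$ is unconditionally stable, i.e. $|1+\Delta t\,T^{(1)}_\lambda(\alpha_{i,k},\Delta t)\lambda|\leq1$ for all $\Delta t>0$ and all $\lambda\in\mathbb{C}$ with $\mathrm{Re}(\lambda)\leq0$. Then the Runge–Kutta integration above is unconditionally stable: $|y^{n+1}|\leq|y^n|$ for all $\Delta t>0$, all $\lambda$ with $\mathrm{Re}(\lambda)\leq 0$ and all $y^n\in\mathbb{C}$. *)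

(* Defs.v *)
(* complex numbers are R[i] = complex R over a real closed field R
   (mathcomp-real-closed); for R = the reals this is the usual field C. *)
From HB Require Import structures.
From mathcomp Require Import all_boot all_order all_algebra.
From mathcomp Require Import complex.
Set Implicit Arguments. Unset Strict Implicit. Unset Printing Implicit Defensive.
Import Order.TTheory GRing.Theory Num.Theory.
Local Open Scope ring_scope.
Local Open Scope complex_scope.

Definition T1 (R : rcfType) (lam : R[i]) (beta dt : R) : R[i] :=
  (1 - (beta * dt)%:C * lam)^-1.

Fixpoint rk_stages (R : rcfType) (a b : nat -> nat -> R) (alpha dt : R)
    (lam y0 : R[i]) (n : nat) : seq R[i] :=
  match n with
  | 0 => [:: y0]
  | m.+1 =>
      let ys := rk_stages a b alpha dt lam y0 m in
      rcons ys (\sum_(k < m.+1)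
                  ((a m.+1 k)%:C * ys`_k
                   + (dt * b m.+1 k)%:C * T1 lam alpha dt * lam * ys`_k))
  end.

Definition rk_step (R : rcfType) (s : nat) (a b : nat -> nat -> R) (alpha dt : R)
    (lam y0 : R[i]) : R[i] :=
  (rk_stages a b alpha dt lam y0 s)`_s.

(* Main.v *)
Require Import Defs.
From HB Require Import structures.
From mathcomp Require Import all_boot all_order all_algebra.
From mathcomp Require Import complex.
From mathcomp Require Import ring.
Import Order.TTheory GRing.Theory Num.Theory.
Local Open Scope ring_scope.
Local Open Scope complex_scope.

Section S.
Variables (R : rcfType) (a b : nat -> nat -> R) (alpha dt : R) (lam y0 : R[i]).
Local Notation st := (rk_stages a b alpha dt lam y0).

Lemma size_st n : size (st n) = n.+1.
Proof. by elim: n => //= n IH; rewrite size_rcons IH. Qed.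

Lemma nth_st n k : (k <= n)%N -> (st n)`_k = (st k)`_k.
Proof.
elim: n => [|n IH]; first by rewrite leqn0 => /eqP->.
rewrite leq_eqVlt => /orP[/eqP->//|Hk].
by rewrite /= nth_rcons size_st Hk IH.
Qed.

Lemma st_succ m : (st m.+1)`_m.+1 = \sum_(k < m.+1)
  ((a m.+1 k)%:C * (st k)`_k + (dt * b m.+1 k)%:C * T1 lam alpha dt * lam * (st k)`_k).
Proof.
rewrite /= nth_rcons size_st ltnn eqxx; apply: eq_bigr => k _.
by rewrite nth_st // -ltnS.
Qed.
End S.

Lemma coef_bound (R : rcfType) (A B alpha dt : R) (lam : R[i]) :
  0 <= A -> 0 <= B -> 0 < dt -> Re lam <= 0 ->
  (0 < B -> forall (dt : R) (lam : R[i]), 0 < dt -> Re lam <= 0 ->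
       `|1 + dt%:C * T1 lam (A / B * alpha) dt * lam| <= 1) ->
  `|A%:C + (dt * B)%:C * T1 lam alpha dt * lam| <= A%:C.
Proof.
move=> hA hB hdt hlam H.
have [B0|Bpos] := eqVneq B 0.
  have -> : (dt * B)%:C = 0 :> R[i] by rewrite B0 mulr0; reflexivity.
  by rewrite !mul0r addr0 ger0_norm // ler0c.
have Bp : 0 < B by rewrite lt_def Bpos hB.
have [A0|Apos] := eqVneq A 0.
  exfalso.
  have := H Bp 1 (-3) ltr01.
  have -> : T1 (-3) (A / B * alpha) 1 = 1.
    by rewrite /T1 A0 !mul0r subr0 invr1.
  rewrite mulr1 mul1r => h.
  have hre : 'Re (-3 : R[i]) <= 0.
    by rewrite (Creal_ReP _ _) ?rpredN ?realn // oppr_le0 ler0n.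
  have := h hre.
  have -> : (1 - 3 : R[i]) = - 2%:R by ring.
  by rewrite normrN normr_nat lern1.
have Ap : 0 < A by rewrite lt_def Apos hA.
have -> : A%:C + (dt * B)%:C * T1 lam alpha dt * lam =
   A%:C * (1 + (B / A * dt)%:C * T1 lam (A / B * alpha) (B / A * dt) * lam).
  have -> : T1 lam (A / B * alpha) (B / A * dt) = T1 lam alpha dt.
    rewrite /T1; have -> : A / B * alpha * (B / A * dt) = alpha * dt.
      by field; rewrite Apos Bpos.
    by [].
  rewrite mulrDr mulr1 !mulrA -rmorphM /=.
  by congr (_ + (_ * _ * _)); congr (_%:C); field.
rewrite normrM ger0_norm ?ler0c //.
rewrite -{2}(mulr1 A%:C) ler_wpM2l ?ler0c //.
apply: H => //; exact: mulr_gt0 (divr_gt0 Bp Ap) hdt.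
Qed.

Lemma step_bound (R : rcfType) (A B alpha dt : R) (lam Y y0 : R[i]) :
  0 <= A -> 0 <= B -> 0 < dt -> Re lam <= 0 ->
  (0 < B -> forall (dt : R) (lam : R[i]), 0 < dt -> Re lam <= 0 ->
       `|1 + dt%:C * T1 lam (A / B * alpha) dt * lam| <= 1) ->
  `|Y| <= `|y0| ->
  `|A%:C * Y + (dt * B)%:C * T1 lam alpha dt * lam * Y| <= A%:C * `|y0|.
Proof.
move=> hA hB hdt hlam H hY.
rewrite -mulrDl normrM; apply: ler_pM => //.
exact: coef_bound.
Qed.

Theorem lemma2 (R : rcfType) (s : nat) (a b : nat -> nat -> R) (alpha : R) :
  (1 <= s)%N ->
  (forall i k, (1 <= i <= s)%N -> (k < i)%N -> 0 <= a i k) ->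
  (forall i k, (1 <= i <= s)%N -> (k < i)%N -> 0 <= b i k) ->
  (forall i, (1 <= i <= s)%N -> \sum_(k < i) a i k = 1) ->
  0 < alpha ->
  (forall i k, (1 <= i <= s)%N -> (k < i)%N -> 0 < b i k ->
     forall (dt : R) (lam : R[i]), 0 < dt -> Re lam <= 0 ->
       `|1 + dt%:C * T1 lam (a i k / b i k * alpha) dt * lam| <= 1) ->
  forall (dt : R) (lam y0 : R[i]), 0 < dt -> Re lam <= 0 ->
    `|rk_step s a b alpha dt lam y0| <= `|y0|.
Proof.
move=> hs ha hb hsum halpha hstab dt lam y0 hdt hlam.
suff H : forall i, (i <= s)%N -> `|(rk_stages a b alpha dt lam y0 i)`_i| <= `|y0|.
  exact: H.
elim/ltn_ind => i IH his.
case: i IH his => [|m] IH his; first by rewrite /= lexx.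
have him : (1 <= m.+1 <= s)%N by rewrite his.
rewrite st_succ.
apply: le_trans (ler_norm_sum _ _ _) _.
have -> : `|y0| = \sum_(k < m.+1) (a m.+1 k)%:C * `|y0|.
  rewrite -mulr_suml -rmorph_sum hsum // rmorph1 mul1r; reflexivity.
apply: (@ler_sum _ _ _ _ _) => k _.
apply: step_bound.
- exact: ha.
- exact: hb.
- exact: hdt.
- exact: hlam.
- exact: hstab.
- have hk : (k < m.+1)%N := ltn_ord k.
  have hks : (k <= s)%N by apply: leq_trans (ltnW hk) his.
  exact: IH k hk hks.
Qed.
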